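(* Let $n\ge2$, $k\in\{1,\ldots,n\}$, $r\in\mathbb{R}$, and $x^0\in\mathbb{R}^n$ with $x^0_1\ge\cdots\ge x^0_n$ and $\sum_{i=1}^k x^0_i>r$. Beginning from $(k_0,k_1)=(k-1,k)$, every index pair $(k_0,k_1)$ on the trajectory generated by the ESGS procedure satisfies $\mathtt{kkt}_1(k_0,k_1)$, $\mathtt{kkt}_3(k_0,k_1)$ and $\mathtt{kkt}_4(k_0,k_1)$.
   Context: Conventions: $x^0_0:=+\infty$, $x^0_{n+1}:=-\infty$. For $k_0\in\{0,\ldots,k-1\}$ and $k_1\in\{k,\ldots,n\}$ define $S_\alpha=\sum_{i=1}^{k_0}x^0_i-r$, $S_\beta=\sum_{i=k_0+1}^{k_1}x^0_i$, $\rho=k_0(k_1-k_0)+(k-k_0)^2$, $\theta(k_0,k_1)=(k_0S_\beta-(k-k_0)S_\alpha)/\rho$, $\lambda(k_0,k_1)=((k-k_0)S_\beta+(k_1-k_0)S_\alpha)/\rho$. KKT indicators: $\mathtt{kkt}_1$: $\lambda>0$; $\mathtt{kkt}_2$: $x^0_{k_0}>\theta+\lambda$; $\mathtt{kkt}_3$: $\theta+\lambda\ge x^0_{k_0+1}$; $\mathtt{kkt}_4$: $x^0_{k_1}\ge\theta$; $\mathtt{kkt}_5$: $\theta>x^0_{k_1+1}$ (all evaluated at $(k_0,k_1)$). ESGS trajectory: start at $(k_0,k_1)=(k-1,k)$ and repeat: if $\mathtt{kkt}_2\wedge\mathtt{kkt}_5$ holds, stop; else if $\mathtt{kkt}_2$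 holds, set $k_1\gets k_1+1$; else set $k_0\gets k_0-1$. *)

(* Defs.v *)
(* Vectors x^0 in R^n are modelled as x : nat -> R, of which
   only the entries x 1, ..., x n are meaningful (1-based indexing as in the
   paper). The conventions x^0_0 = +oo and x^0_{n+1} = -oo are built into the
   KKT indicators kkt2 and kkt5 below (the only places they matter). *)
From HB Require Import structures.
From mathcomp Require Import all_boot all_order all_algebra.
Set Implicit Arguments. Unset Strict Implicit. Unset Printing Implicit Defensive.
Import Order.TTheory GRing.Theory Num.Theory.
Local Open Scope ring_scope.

Section ESGS.
Variables (R : realFieldType) (n k : nat) (r : R) (x : nat -> R).

Definition S_alpha (k0 : nat) : R := \sum_(1 <= i < k0.+1) x i - r.
Definition S_beta (k0 k1 : nat) : R := \sum_(k0.+1 <= i < k1.+1) x i.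
Definition rho (k0 k1 : nat) : R :=
  k0%:R * (k1%:R - k0%:R) + (k%:R - k0%:R) ^+ 2.
Definition theta (k0 k1 : nat) : R :=
  (k0%:R * S_beta k0 k1 - (k%:R - k0%:R) * S_alpha k0) / rho k0 k1.
Definition lambda (k0 k1 : nat) : R :=
  ((k%:R - k0%:R) * S_beta k0 k1 + (k1%:R - k0%:R) * S_alpha k0) / rho k0 k1.

Definition kkt1 (k0 k1 : nat) : bool := 0 < lambda k0 k1.
Definition kkt2 (k0 k1 : nat) : bool :=
  (k0 == 0)%N || (theta k0 k1 + lambda k0 k1 < x k0).
Definition kkt3 (k0 k1 : nat) : bool := x k0.+1 <= theta k0 k1 + lambda k0 k1.
Definition kkt4 (k0 k1 : nat) : bool := theta k0 k1 <= x k1.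
Definition kkt5 (k0 k1 : nat) : bool :=
  (k1 == n)%N || (x k1.+1 < theta k0 k1).

Inductive esgs_traj : nat -> nat -> Prop :=
| esgs_start : esgs_traj k.-1 k
| esgs_inc_k1 k0 k1 : esgs_traj k0 k1 -> ~~ (kkt2 k0 k1 && kkt5 k0 k1) ->
    kkt2 k0 k1 -> esgs_traj k0 k1.+1
| esgs_dec_k0 k0 k1 : esgs_traj k0 k1 -> ~~ (kkt2 k0 k1 && kkt5 k0 k1) ->
    ~~ kkt2 k0 k1 -> esgs_traj k0.-1 k1.
End ESGS.

(* Main.v *)
Require Import Defs.
From HB Require Import structures.
From mathcomp Require Import all_boot all_order all_algebra.
From mathcomp Require Import ring lra.
Import Order.TTheory GRing.Theory Num.Theory.
Local Open Scope ring_scope.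

Lemma inc_alg (R : realFieldType) (K0 K K1 A B y X1 t l t' l' : R) :
 0 <= K0 -> K0 < K -> K <= K1 ->
 t = (K0*B - (K-K0)*A)/(K0*(K1-K0) + (K-K0)^+2) ->
 l = ((K-K0)*B + (K1-K0)*A)/(K0*(K1-K0) + (K-K0)^+2) ->
 t' = (K0*(B+y) - (K-K0)*A)/(K0*(K1+1-K0) + (K-K0)^+2) ->
 l' = ((K-K0)*(B+y) + (K1+1-K0)*A)/(K0*(K1+1-K0) + (K-K0)^+2) ->
 0 < l -> X1 <= t + l -> t <= y ->
 [/\ 0 < l', X1 <= t'+l' & t' <= y].
Proof.
move=> h0 h1 h2 ht hl ht' hl' l0 h3 ty.
have rp : 0 < K0*(K1-K0) + (K-K0)^+2 by nra.
have rp' : 0 < K0*(K1+1-K0) + (K-K0)^+2 by nra.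
have rn := lt0r_neq0 rp; have rn' := lt0r_neq0 rp'.
have e1 : l' - l = (K-K0)*(y-t)/(K0*(K1+1-K0) + (K-K0)^+2).
  by rewrite ht hl hl'; field; rewrite rn rn'.
have e2 : (t'+l') - (t+l) = K*(y-t)/(K0*(K1+1-K0) + (K-K0)^+2).
  by rewrite ht' hl' ht hl; field; rewrite ?rn ?rn'.
have e3 : y - t' = (y-t)*(K0*(K1-K0) + (K-K0)^+2)/(K0*(K1+1-K0) + (K-K0)^+2).
  by rewrite ht ht'; field; rewrite ?rn ?rn'.
have g1 : 0 <= (K-K0)*(y-t)/(K0*(K1+1-K0) + (K-K0)^+2).
  by rewrite divr_ge0 ?mulr_ge0 ?subr_ge0 // ltW.
have g2 : 0 <= K*(y-t)/(K0*(K1+1-K0) + (K-K0)^+2).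
  by rewrite divr_ge0 ?mulr_ge0 ?subr_ge0 // ?ltW //; lra.
have g3 : 0 <= (y-t)*(K0*(K1-K0) + (K-K0)^+2)/(K0*(K1+1-K0) + (K-K0)^+2).
  by rewrite divr_ge0 ?mulr_ge0 ?subr_ge0 // ltW.
split; lra.
Qed.

Lemma dec_alg (R : realFieldType) (P K K1 A B y X t l t' l' : R) :
 0 <= P -> P + 1 < K -> K <= K1 ->
 t = ((P+1)*B - (K-(P+1))*(A+y))/((P+1)*(K1-(P+1)) + (K-(P+1))^+2) ->
 l = ((K-(P+1))*B + (K1-(P+1))*(A+y))/((P+1)*(K1-(P+1)) + (K-(P+1))^+2) ->
 t' = (P*(y+B) - (K-P)*A)/(P*(K1-P) + (K-P)^+2) ->
 l' = ((K-P)*(y+B) + (K1-P)*A)/(P*(K1-P) + (K-P)^+2) ->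
 0 < l -> t <= X -> y <= t + l ->
 [/\ 0 < l', y <= t'+l' & t' <= X].
Proof.
move=> h0 h1 h2 ht hl ht' hl' l0 h3 ty.
have rp : 0 < (P+1)*(K1-(P+1)) + (K-(P+1))^+2 by nra.
have rp' : 0 < P*(K1-P) + (K-P)^+2 by nra.
have rn := lt0r_neq0 rp; have rn' := lt0r_neq0 rp'.
have e1 : l' - l = (K1-K)*(t+l-y)/(P*(K1-P) + (K-P)^+2).
  by rewrite ht hl hl'; field; rewrite ?rn ?rn'.
have e2 : t - t' = K*(t+l-y)/(P*(K1-P) + (K-P)^+2).
  by rewrite ht' ht hl; field; rewrite ?rn ?rn'.
have e3 : t'+l' - y = (t+l-y)*((K-P-1)*K + (P+1)*(K1-K))/(P*(K1-P) + (K-P)^+2).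
  by rewrite ht hl ht' hl'; field; rewrite ?rn ?rn'.
have g1 : 0 <= (K1-K)*(t+l-y)/(P*(K1-P) + (K-P)^+2).
  by rewrite divr_ge0 ?mulr_ge0 ?subr_ge0 // ltW.
have g2 : 0 <= K*(t+l-y)/(P*(K1-P) + (K-P)^+2).
  by rewrite divr_ge0 ?mulr_ge0 ?subr_ge0 // ?ltW //; lra.
have g3 : 0 <= (t+l-y)*((K-P-1)*K + (P+1)*(K1-K))/(P*(K1-P) + (K-P)^+2).
  by rewrite divr_ge0 ?mulr_ge0 ?subr_ge0 // ?ltW //; nra.
split; lra.
Qed.

Lemma start_alg (R : realFieldType) (K0 A y t l : R) :
 0 <= K0 -> 0 < A + y ->
 t = (K0*y - (K0+1-K0)*A)/(K0*(K0+1-K0) + (K0+1-K0)^+2) ->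
 l = ((K0+1-K0)*y + (K0+1-K0)*A)/(K0*(K0+1-K0) + (K0+1-K0)^+2) ->
 [/\ 0 < l, y <= t+l & t <= y].
Proof.
move=> h0 h1 ht hl.
have rp : 0 < K0*(K0+1-K0) + (K0+1-K0)^+2 by nra.
have rn := lt0r_neq0 rp.
have e1 : l = (A+y)/(K0*(K0+1-K0) + (K0+1-K0)^+2).
  by rewrite hl; field; rewrite ?rn.
have e2 : t + l = y.
  by rewrite ht hl; field; rewrite ?rn.
have g1 : 0 < (A+y)/(K0*(K0+1-K0) + (K0+1-K0)^+2) by rewrite divr_gt0.
split; lra.
Qed.

Lemma S_alphaS (R : realFieldType) (r : R) (x : nat -> R) p :
  S_alpha r x p.+1 = S_alpha r x p + x p.+1.
Proof. by rewrite /S_alpha big_nat_recr //=; ring. Qed.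

Lemma inv (R : realFieldType) (n k : nat) (r : R) (x : nat -> R) :
  (1 <= k)%N -> r < \sum_(1 <= i < k.+1) x i ->
  forall k0 k1 : nat, esgs_traj n k r x k0 k1 ->
    (k0 < k <= k1)%N /\
    [/\ kkt1 k r x k0 k1, kkt3 k r x k0 k1 & kkt4 k r x k0 k1].
Proof.
move=> hk hr k0 k1; elim=> {k0 k1}.
- case: k hk hr => [//|k'] _ hr /=.
  split; first by rewrite leqnn andbT.
  rewrite /kkt1 /kkt3 /kkt4.
  have [] := @start_alg R k'%:R (S_alpha r x k') (x k'.+1)
     (theta k'.+1 r x k' k'.+1) (lambda k'.+1 r x k' k'.+1).
  + by rewrite ler0n.
  + by rewrite -S_alphaS /S_alpha subr_gt0.
  + by rewrite /theta /rho /S_beta big_nat1 -natr1.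
  + by rewrite /lambda /rho /S_beta big_nat1 -natr1.
  by move=> -> -> ->.
- move=> k0 k1 _ [/andP [h1 h2] [i1 i3 i4]] hn h2'.
  have h5 : ~~ kkt5 n k r x k0 k1 by move: hn; rewrite h2'.
  move: h5; rewrite /kkt5 negb_or => /andP [_]; rewrite -leNgt => h5.
  split; first by rewrite h1 (leq_trans h2).
  rewrite /kkt1 /kkt3 /kkt4.
  have [] := @inc_alg R k0%:R k%:R k1%:R (S_alpha r x k0) (S_beta x k0 k1)
     (x k1.+1) (x k0.+1) (theta k r x k0 k1) (lambda k r x k0 k1)
     (theta k r x k0 k1.+1) (lambda k r x k0 k1.+1).
  + by rewrite ler0n.
  + by rewrite ltr_nat.
  + by rewrite ler_nat.
  + by [].
  + by [].
  + by rewrite /theta /rho /S_beta big_nat_recr ?ltnS 1?(leq_trans (ltnW h1)) //= -natr1.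
  + by rewrite /lambda /rho /S_beta big_nat_recr ?ltnS 1?(leq_trans (ltnW h1)) //= -natr1.
  + exact: i1.
  + exact: i3.
  + exact: h5.
  by move=> -> -> ->.
- move=> k0 k1 _ [/andP [h1 h2] [i1 i3 i4]] _.
  rewrite /kkt2 negb_or => /andP [].
  case: k0 h1 i1 i3 i4 => [//|p] h1 i1 i3 i4 _; rewrite -leNgt => h6 /=.
  split; first by rewrite h2 andbT (ltn_trans _ h1).
  rewrite /kkt1 /kkt3 /kkt4.
  have [] := @dec_alg R p%:R k%:R k1%:R (S_alpha r x p) (S_beta x p.+1 k1)
     (x p.+1) (x k1) (theta k r x p.+1 k1) (lambda k r x p.+1 k1)
     (theta k r x p k1) (lambda k r x p k1).
  + by rewrite ler0n.
  + by rewrite natr1 ltr_nat.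
  + by rewrite ler_nat.
  + by rewrite /theta /rho -S_alphaS -natr1.
  + by rewrite /lambda /rho -S_alphaS -natr1.
  + by rewrite /theta /rho /S_beta [in LHS]big_ltn // ltnS (leq_trans _ h2) // ltnW.
  + by rewrite /lambda /rho /S_beta [in LHS]big_ltn // ltnS (leq_trans _ h2) // ltnW.
  + exact: i1.
  + exact: i4.
  + exact: h6.
  by move=> -> -> ->.
Qed.

Theorem lemma3p4 (R : realFieldType) (n k : nat) (r : R) (x : nat -> R) :
  (2 <= n)%N -> (1 <= k <= n)%N ->
  (forall i j : nat, (1 <= i)%N -> (i <= j)%N -> (j <= n)%N -> x j <= x i) ->
  r < \sum_(1 <= i < k.+1) x i ->
  forall k0 k1 : nat, esgs_traj n k r x k0 k1 ->
    [/\ kkt1 k r x k0 k1, kkt3 k r x k0 k1 & kkt4 k r x k0 k1].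
Proof.
move=> _ /andP [hk _] _ hr k0 k1 ht.
by case: (@inv R n k r x hk hr k0 k1 ht).
Qed.
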